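(* In system $\mathscr{E}$: if $\Phi\triangleright\Gamma\vdash^{(b,e,m,f)}t:\sigma$ and $t\to_h t'$ by a step of kind $\mathcal{R}\in\{b,e,m\}$, then there is $\Phi'\triangleright\Gamma\vdash^{(b',e',m',f)}t':\sigma$ where: if $\mathcal{R}=b$ then $b'=b-1$, $e'=e$, $m'=m$; if $\mathcal{R}=e$ then $b'=b$, $e'=e-1$, $m'=m$; if $\mathcal{R}=m$ then $b'=b$, $e'=e$, $m'=m-1$.
   Context: Pair pattern calculus: patterns $p,q ::= x\mid\langle p,q\rangle$ (linear); $\mathrm{var}(p)$ = variables of $p$; $p\# q$ means disjoint variables. Terms $t,u ::= x\mid\lambda p.t\mid\langle t,u\rangle\mid t\,u\mid t[p/u]$, $\mathrm{var}(p)$ bound in $t$ in $\lambda p.t$ and $t[p/u]$; $\mathrm{fv}$ as usual; terms modulo $\alpha$. List contexts $L::=\Box\mid L[p/u]$, $L\langle t\rangle$ plugging (possibly capturing), $\mathrm{bv}(L)$ variables bound by $L$; $t\{x/u\}$ capture-avoiding substitution; $\mathrm{abs}(t)$ iff $t=L\langle\lambda p.u\rangle$. Head reduction ($t\not\to_h$: no $u$ with $t\to_h u$): (b) $L\langle\lambda p.t\rangle u\to_h L\langle t[p/u]\rangle$ if $\mathrm{bv}(L)\cap\mathrm{fv}(u)=\emptyset$; (m) $t[\langle p_1,p_2\rangle/L\langle\langle u_1,u_2\rangle\rangle]\to_h L\langle t[p_1/u_1][p_2/u_2]\rangle$ if $t\not\to_h$ and $\mathrm{bv}(L)\cap\mathrm{fv}(t)=\emptyset$;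 (e) $t[x/u]\to_h t\{x/u\}$ if $t\not\to_h$; closure: $\lambda p.t\to_h\lambda p.t'$ if $t\to_h t'$; $tu\to_h t'u$ if $t\to_h t'$ and not $\mathrm{abs}(t)$; $t[p/u]\to_h t'[p/u]$ if $t\to_h t'$; $t[p/u]\to_h t[p/u']$ if $t\not\to_h$, $p$ not a variable, $u\to_h u'$. The kind of a step is the base rule (b), (e) or (m) it uses. System $\mathscr{E}$. Types: tight types $\mathtt{t} ::= \bullet_{\mathcal{N}}\mid\bullet_{\mathcal{M}}$; types $\sigma ::= \mathtt{t}\mid \mathcal{A}_1\times\mathcal{A}_2\mid \mathcal{A}\to\sigma$; multi-types $\mathcal{A} ::= [\sigma_k]_{k\in K}$ (finite, possibly empty). Contexts map variables to multi-types, $\mathrm{dom}(\Gamma)$ = variables with non-empty multi-type; $\wedge$ pointwise multiset union; $\Gamma|_p$ restriction to $\mathrm{var}(p)$; $\Gamma\setminus\mathrm{var}(p)$ removal. $\mathrm{tight}(\sigma)$ iff $\sigma\in\{\bullet_{\mathcal{N}},\bullet_{\mathcal{M}}\}$, extended elementwise. Rules: (pat_v) $x:\mathcal{A}\Vdash^{(1,0,0)} x:\mathcal{A}$. (pat_×) from $\Gamma\Vdash^{(e_p,m_p,f_p)}p:\mathcal{A}$, $\Delta\Vdash^{(e_q,m_q,f_q)}q:\mathcal{B}$, $p\#q$ infer $\Gamma\wedge\Delta\Vdash^{(e_p+e_q,1+m_p+m_q,f_p+f_q)}\langle p,q\rangle:[\mathcal{A}\times\mathcal{B}]$. (pat_p)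 if $\mathrm{dom}(\Gamma)\subseteq\mathrm{var}(\langle p,q\rangle)$ and $\mathrm{tight}(\Gamma)$ then $\Gamma\Vdash^{(0,0,1)}\langle p,q\rangle:[\bullet_{\mathcal{N}}]$. (ax) $x:[\sigma]\vdash^{(0,0,0,0)}x:\sigma$. (abs) from $\Gamma\vdash^{(b,e,m,f)}t:\sigma$ and $\Gamma|_p\Vdash^{(e_p,m_p,f_p)}p:\mathcal{A}$ infer $\Gamma\setminus\mathrm{var}(p)\vdash^{(b+1,e+e_p,m+m_p,f+f_p)}\lambda p.t:\mathcal{A}\to\sigma$. (abs_p) from $\Gamma\vdash^{(b,e,m,f)}t:\mathtt{t}$ ($\mathtt{t}$ tight) and $\mathrm{tight}(\Gamma|_p)$ infer $\Gamma\setminus\mathrm{var}(p)\vdash^{(b,e,m,f+1)}\lambda p.t:\bullet_{\mathcal{M}}$. (many) from $(\Gamma_k\vdash^{(b_k,e_k,m_k,f_k)}t:\sigma_k)_{k\in K}$ infer $\wedge_k\Gamma_k\vdash^{(\sum b_k,\sum e_k,\sum m_k,\sum f_k)}t:[\sigma_k]_{k\in K}$. (app) from $\Gamma\vdash^{(b_t,e_t,m_t,f_t)}t:\mathcal{A}\to\sigma$, $\Delta\vdash^{(b_u,e_u,m_u,f_u)}u:\mathcal{A}$ infer $\Gamma\wedge\Delta\vdash^{(b_t+b_u,e_t+e_u,m_t+m_u,f_t+f_u)}t\,u:\sigma$. (app_p) from $\Gamma\vdash^{(b,e,m,f)}t:\bullet_{\mathcal{N}}$ infer $\Gamma\vdash^{(b,e,m,f+1)}t\,u:\bullet_{\mathcal{N}}$.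 (pair) from $\Gamma\vdash^{(b_t,e_t,m_t,f_t)}t:\mathcal{A}$, $\Delta\vdash^{(b_u,e_u,m_u,f_u)}u:\mathcal{B}$ infer $\Gamma\wedge\Delta\vdash^{(b_t+b_u,e_t+e_u,m_t+m_u,f_t+f_u)}\langle t,u\rangle:\mathcal{A}\times\mathcal{B}$. (pair_p) $\vdash^{(0,0,0,1)}\langle t,u\rangle:\bullet_{\mathcal{M}}$. (match) from $\Gamma\vdash^{(b_t,e_t,m_t,f_t)}t:\sigma$, $\Gamma|_p\Vdash^{(e_p,m_p,f_p)}p:\mathcal{A}$, $\Delta\vdash^{(b_u,e_u,m_u,f_u)}u:\mathcal{A}$ infer $(\Gamma\setminus\mathrm{var}(p))\wedge\Delta\vdash^{(b_t+b_u,e_t+e_u+e_p,m_t+m_u+m_p,f_t+f_u+f_p)}t[p/u]:\sigma$. *)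

(* Defs.v *)
(* Terms are represented with de Bruijn indices (terms modulo alpha):
   a pattern p binds (psize p) consecutive indices 0 .. psize p - 1,
   assigned to the leaves of p from left to right; free indices of the body
   are shifted by psize p. *)
From Stdlib Require Import List Arith.
Import ListNotations.

Inductive pat : Type :=
| PVar : pat
| PPair : pat -> pat -> pat.      (* <p, q>  (linear by construction) *)

Fixpoint psize (p : pat) : nat :=
  match p with PVar => 1 | PPair p q => psize p + psize q end.

Inductive term : Type :=
| Var : nat -> term
| Lam : pat -> term -> term
| Pair : term -> term -> term
| App : term -> term -> term
| Sub : term -> pat -> term -> term.     (* t[p/u]         *)

Fixpoint lift (d c : nat) (t : term) : term :=
  match t with
  | Var n => if c <=? n then Var (n + d) else Var n
  | Lam p s => Lam p (lift d (c + psize p) s)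
  | Pair a b => Pair (lift d c a) (lift d c b)
  | App a b => App (lift d c a) (lift d c b)
  | Sub s p u => Sub (lift d (c + psize p) s) p (lift d c u)
  end.

(* capture-avoiding substitution of u for index c (u lives outside the
   c binders), removing that binder *)
Fixpoint subst (c : nat) (u : term) (t : term) : term :=
  match t with
  | Var n => if n =? c then lift c 0 u
             else if c <? n then Var (n - 1) else Var n
  | Lam p s => Lam p (subst (c + psize p) u s)
  | Pair a b => Pair (subst c u a) (subst c u b)
  | App a b => App (subst c u a) (subst c u b)
  | Sub s p w => Sub (subst (c + psize p) u s) p (subst c u w)
  end.

(* list contexts L ::= [] | L[p/u];  the head of the list is the outermost
   explicit substitution:  plug ((p,u)::L) w = (plug L w)[p/u] *)
Definition lctx := list (pat * term).

Fixpoint plug (L : lctx) (w : term) : term :=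
  match L with
  | [] => w
  | (p, u) :: L' => Sub (plug L' w) p u
  end.

Fixpoint bvL (L : lctx) : nat :=
  match L with [] => 0 | (p, _) :: L' => psize p + bvL L' end.

Definition is_abs (t : term) : Prop :=
  exists L p s, t = plug L (Lam p s).

Inductive kind : Type := KB | KE | KM.

(* Defined by structural
   recursion on t (the negative premises "s is head normal" only concern
   strict subterms). The side conditions bv(L) # fv(...) of the named
   presentation become index shifts. *)
Fixpoint hred (t : term) (k : kind) (t' : term) {struct t} : Prop :=
  match t with
  | Var _ => False
  | Pair _ _ => False
  | Lam p s => exists s', hred s k s' /\ t' = Lam p s'
  | App s u =>
      (k = KB /\ exists L p s0,
          s = plug L (Lam p s0) /\
          t' = plug L (Sub s0 p (lift (bvL L) 0 u)))
      \/
      (~ is_abs s /\ exists s', hred s k s' /\ t' = App s' u)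
  | Sub s p u =>
      (k = KM /\ (forall k0 s0, ~ hred s k0 s0) /\
        exists p1 p2 L u1 u2,
          p = PPair p1 p2 /\ u = plug L (Pair u1 u2) /\
          t' = plug L (Sub (Sub (lift (bvL L) (psize p1 + psize p2) s)
                                p1 (lift (psize p2) 0 u1))
                           p2 u2))
      \/
      (k = KE /\ (forall k0 s0, ~ hred s k0 s0) /\ p = PVar /\
        t' = subst 0 u s)
      \/
      (exists s', hred s k s' /\ t' = Sub s' p u)
      \/
      ((forall k0 s0, ~ hred s k0 s0) /\ p <> PVar /\
        exists u', hred u k u' /\ t' = Sub s p u')
  end.

(* multi-types are represented by lists, identified up to [mt_eqv] *)
Inductive ty : Type :=
| TN : ty
| TM : ty
| TProd : list ty -> list ty -> ty
| TArr : list ty -> ty -> ty.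

Definition mty := list ty.

(* equality of (multi-)types as multisets, recursively *)
Inductive ty_eqv : ty -> ty -> Prop :=
| teqv_N : ty_eqv TN TN
| teqv_M : ty_eqv TM TM
| teqv_prod A A' B B' : mt_eqv A A' -> mt_eqv B B' ->
    ty_eqv (TProd A B) (TProd A' B')
| teqv_arr A A' s s' : mt_eqv A A' -> ty_eqv s s' ->
    ty_eqv (TArr A s) (TArr A' s')
with mt_eqv : mty -> mty -> Prop :=
| meqv_nil : mt_eqv [] []
| meqv_cons s s' A B1 B2 : ty_eqv s s' -> mt_eqv A (B1 ++ B2) ->
    mt_eqv (s :: A) (B1 ++ s' :: B2).

Definition tight (s : ty) : Prop := s = TN \/ s = TM.
Definition tight_mty (A : mty) : Prop := Forall tight A.

Definition ctx := nat -> mty.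
Definition ctx_empty : ctx := fun _ => [].
Definition ctx_union (G D : ctx) : ctx := fun n => G n ++ D n.
Definition ctx_single (x : nat) (s : ty) : ctx :=
  fun n => if n =? x then [s] else [].
Definition restr (G : ctx) (p : pat) : list mty := map G (seq 0 (psize p)).
Definition remove (G : ctx) (p : pat) : ctx := fun n => G (n + psize p).
Definition ctx_eqv (G G' : ctx) : Prop := forall n, mt_eqv (G n) (G' n).

(* ---------- pattern typing  Gamma ||-^(e,m,f) p : A ----------
   the context of a pattern is the list of multi-types of its leaves *)
Inductive pty : list mty -> pat -> mty -> nat -> nat -> nat -> Prop :=
| pat_v A : pty [A] PVar A 1 0 0
| pat_x G D p q A B ep mp fp eq mq fq :
    pty G p A ep mp fp -> pty D q B eq mq fq ->
    pty (G ++ D) (PPair p q) [TProd A B] (ep + eq) (1 + mp + mq) (fp + fq)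
| pat_p G p q :
    length G = psize (PPair p q) -> Forall tight_mty G ->
    pty G (PPair p q) [TN] 0 0 1.

Inductive typed : ctx -> term -> ty -> nat -> nat -> nat -> nat -> Prop :=
| ty_ax x s : typed (ctx_single x s) (Var x) s 0 0 0 0
| ty_abs G t s p A b e m f ep mp fp :
    typed G t s b e m f -> pty (restr G p) p A ep mp fp ->
    typed (remove G p) (Lam p t) (TArr A s) (b + 1) (e + ep) (m + mp) (f + fp)
| ty_abs_p G t s p b e m f :
    typed G t s b e m f -> tight s -> Forall tight_mty (restr G p) ->
    typed (remove G p) (Lam p t) TM b e m (f + 1)
| ty_app G D t u A s bt et mt ft bu eu mu fu :
    typed G t (TArr A s) bt et mt ft -> typed_many D u A bu eu mu fu ->
    typed (ctx_union G D) (App t u) s (bt + bu) (et + eu) (mt + mu) (ft + fu)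
| ty_app_p G t u b e m f :
    typed G t TN b e m f -> typed G (App t u) TN b e m (f + 1)
| ty_pair G D t u A B bt et mt ft bu eu mu fu :
    typed_many G t A bt et mt ft -> typed_many D u B bu eu mu fu ->
    typed (ctx_union G D) (Pair t u) (TProd A B)
      (bt + bu) (et + eu) (mt + mu) (ft + fu)
| ty_pair_p t u : typed ctx_empty (Pair t u) TM 0 0 0 1
| ty_match G D t p u s A bt et mt ft ep mp fp bu eu mu fu :
    typed G t s bt et mt ft -> pty (restr G p) p A ep mp fp ->
    typed_many D u A bu eu mu fu ->
    typed (ctx_union (remove G p) D) (Sub t p u) s
      (bt + bu) (et + eu + ep) (mt + mu + mp) (ft + fu + fp)
(* multisets are represented by lists: judgments are identified up to
   multiset equality of contexts and types (counters unchanged) *)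
| ty_conv G G' t s s' b e m f :
    typed G t s b e m f -> ctx_eqv G G' -> ty_eqv s s' ->
    typed G' t s' b e m f
with typed_many : ctx -> term -> mty -> nat -> nat -> nat -> nat -> Prop :=
| many_nil t : typed_many ctx_empty t [] 0 0 0 0
| many_cons G D t s A b e m f b' e' m' f' :
    typed G t s b e m f -> typed_many D t A b' e' m' f' ->
    typed_many (ctx_union G D) t (s :: A) (b + b') (e + e') (m + m') (f + f').

(* Main.v *)
Require Import Defs.
From Stdlib Require Import List Arith Lia Permutation FunctionalExtensionality.
Import ListNotations.

Fixpoint ty_refl (s : ty) : ty_eqv s s :=
  match s with
  | TN => teqv_N
  | TM => teqv_M
  | TProd A B => teqv_prod A A B B
      ((fix mr (A : list ty) : mt_eqv A A :=
         match A with [] => meqv_nil | x :: A' => meqv_cons x x A' [] A' (ty_refl x) (mr A') end) A)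
      ((fix mr (A : list ty) : mt_eqv A A :=
         match A with [] => meqv_nil | x :: A' => meqv_cons x x A' [] A' (ty_refl x) (mr A') end) B)
  | TArr A s => teqv_arr A A s s
      ((fix mr (A : list ty) : mt_eqv A A :=
         match A with [] => meqv_nil | x :: A' => meqv_cons x x A' [] A' (ty_refl x) (mr A') end) A)
      (ty_refl s)
  end.

Lemma F2_refl : forall A, Forall2 ty_eqv A A.
Proof. induction A; constructor; auto using ty_refl. Qed.

Lemma mt_char : forall A B, mt_eqv A B <-> exists B', Permutation B B' /\ Forall2 ty_eqv A B'.
Proof.
  split.
  - induction 1 as [|s s' A B1 B2 Hs H IH].
    + exists []; auto.
    + destruct IH as [B' [HP HF]]. exists (s' :: B'). split; auto.
      eapply perm_trans. apply Permutation_sym, Permutation_middle. auto.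
  - revert B. induction A as [|a A IH]; intros B [B' [HP HF]].
    + inversion HF; subst. apply Permutation_sym, Permutation_nil in HP. subst. constructor.
    + inversion HF as [|? b' ? B'' Hab HF']; subst.
      assert (Hin : In b' B) by (eapply Permutation_in; [apply Permutation_sym, HP| left; auto]).
      apply in_split in Hin as [B1 [B2 ->]].
      constructor; auto. apply IH. exists B''. split; auto.
      apply (Permutation_app_inv _ _ [] _ b'). simpl. auto.
Qed.

Lemma mt_perm : forall A B, Permutation A B -> mt_eqv A B.
Proof. intros. apply mt_char. exists A. split. apply Permutation_sym; auto. apply F2_refl. Qed.

Lemma mt_refl : forall A, mt_eqv A A.
Proof. intros; apply mt_perm; auto. Qed.

Lemma mt_app : forall A A' B B', mt_eqv A A' -> mt_eqv B B' -> mt_eqv (A ++ B) (A' ++ B').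
Proof.
  intros A A' B B' H1 H2. apply mt_char in H1 as [X [P1 F1]]. apply mt_char in H2 as [Y [P2 F2]].
  apply mt_char. exists (X ++ Y). split. apply Permutation_app; auto. apply Forall2_app; auto.
Qed.

Lemma mt_extract : forall B1 x B2 C, mt_eqv (B1 ++ x :: B2) C ->
  exists C1 C2 y, C = C1 ++ y :: C2 /\ ty_eqv x y /\ mt_eqv (B1 ++ B2) (C1 ++ C2).
Proof.
  intros B1 x B2 C H. apply mt_char in H as [C' [HP HF]].
  apply Forall2_app_inv_l in HF as [l1 [l2 [F1 [F2 ->]]]].
  inversion F2 as [|? y ? l2' Hxy F2']; subst.
  assert (Hin : In y C) by (eapply Permutation_in; [apply Permutation_sym, HP| apply in_elt]).
  apply in_split in Hin as [C1 [C2 ->]].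
  exists C1, C2, y. split; auto. split; auto.
  apply mt_char. exists (l1 ++ l2'). split. eapply Permutation_app_inv; eauto.
  apply Forall2_app; auto.
Qed.

Lemma mt_insert : forall B1 B2 A x y, mt_eqv (B1 ++ B2) A -> ty_eqv x y ->
  mt_eqv (B1 ++ x :: B2) (y :: A).
Proof.
  intros B1 B2 A x y H Hxy. apply mt_char in H as [A' [HP HF]].
  apply Forall2_app_inv_l in HF as [l1 [l2 [F1 [F2 ->]]]].
  apply mt_char. exists (l1 ++ y :: l2). split.
  eapply perm_trans. apply perm_skip, HP. apply Permutation_middle.
  apply Forall2_app; auto.
Qed.

Scheme ty_eqv_mut := Induction for ty_eqv Sort Prop
with mt_eqv_mut := Induction for mt_eqv Sort Prop.
Combined Scheme eqv_comb from ty_eqv_mut, mt_eqv_mut.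

Lemma eqv_sym : (forall s s', ty_eqv s s' -> ty_eqv s' s) /\ (forall A B, mt_eqv A B -> mt_eqv B A).
Proof.
  apply eqv_comb; intros; try constructor; auto.
  apply mt_insert; auto.
Qed.

Lemma eqv_trans : (forall s s', ty_eqv s s' -> forall s'', ty_eqv s' s'' -> ty_eqv s s'')
  /\ (forall A B, mt_eqv A B -> forall C, mt_eqv B C -> mt_eqv A C).
Proof.
  apply eqv_comb; intros.
  - auto.
  - auto.
  - inversion H1; subst. constructor; auto.
  - inversion H1; subst. constructor; auto.
  - auto.
  - apply mt_extract in H1 as [C1 [C2 [y [-> [H3 H4]]]]]. constructor; auto.
Qed.

Definition ty_sym := proj1 eqv_sym.
Definition mt_sym := proj2 eqv_sym.
Definition ty_trans := proj1 eqv_trans.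
Definition mt_trans := proj2 eqv_trans.

Lemma ctx_refl : forall G, ctx_eqv G G.
Proof. intros G n; apply mt_refl. Qed.
Lemma ctx_sym : forall G G', ctx_eqv G G' -> ctx_eqv G' G.
Proof. intros G G' H n; apply mt_sym; auto. Qed.
Lemma ctx_trans : forall G1 G2 G3, ctx_eqv G1 G2 -> ctx_eqv G2 G3 -> ctx_eqv G1 G3.
Proof. intros G1 G2 G3 H1 H2 n; eapply mt_trans; eauto. Qed.
Lemma ctx_union_cong : forall G G' D D', ctx_eqv G G' -> ctx_eqv D D' ->
  ctx_eqv (ctx_union G D) (ctx_union G' D').
Proof. intros G G' D D' H1 H2 n; apply mt_app; auto. Qed.
Lemma ctx_perm : forall G G', (forall n, Permutation (G n) (G' n)) -> ctx_eqv G G'.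
Proof. intros G G' H n; apply mt_perm; auto. Qed.
Lemma ctx_ext : forall G G', (forall n, G n = G' n) -> ctx_eqv G G'.
Proof. intros G G' H n; rewrite H; apply mt_refl. Qed.

Lemma typed_cnt : forall G t s b e m f b' e' m' f', typed G t s b e m f ->
  b = b' -> e = e' -> m = m' -> f = f' -> typed G t s b' e' m' f'.
Proof. intros; subst; auto. Qed.
Lemma tm_cnt : forall G t s b e m f b' e' m' f', typed_many G t s b e m f ->
  b = b' -> e = e' -> m = m' -> f = f' -> typed_many G t s b' e' m' f'.
Proof. intros; subst; auto. Qed.

Lemma tconv : forall G G' t s s' b e m f, typed G t s b e m f -> ctx_eqv G G' -> ty_eqv s s' ->
  typed G' t s' b e m f.
Proof. intros; eapply ty_conv; eauto. Qed.

Lemma tm_nil_inv : forall G t b e m f, typed_many G t [] b e m f ->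
  G = ctx_empty /\ b = 0 /\ e = 0 /\ m = 0 /\ f = 0.
Proof. intros. inversion H; subst; auto. Qed.

Lemma tm_cons_inv : forall G t s A b e m f, typed_many G t (s :: A) b e m f ->
  exists G1 D b1 e1 m1 f1 b2 e2 m2 f2, G = ctx_union G1 D /\ typed G1 t s b1 e1 m1 f1 /\
   typed_many D t A b2 e2 m2 f2 /\ b = b1 + b2 /\ e = e1 + e2 /\ m = m1 + m2 /\ f = f1 + f2.
Proof. intros. inversion H; subst. do 10 eexists; eauto 10. Qed.

Lemma tm_single_inv : forall G t s b e m f, typed_many G t [s] b e m f ->
  typed G t s b e m f.
Proof.
  intros. apply tm_cons_inv in H as (G1 & D & b1 & e1 & m1 & f1 & b2 & e2 & m2 & f2 & -> & H1 & H2 & ->&->&->&->).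
  apply tm_nil_inv in H2 as (-> & -> & -> & -> & ->).
  eapply tconv. eapply typed_cnt; [exact H1| lia..].
  apply ctx_ext. intros n. unfold ctx_union, ctx_empty. rewrite app_nil_r. auto. apply ty_refl.
Qed.

Lemma tm_single : forall G t s b e m f, typed G t s b e m f ->
  exists G', ctx_eqv G' G /\ typed_many G' t [s] b e m f.
Proof.
  intros. exists (ctx_union G ctx_empty). split.
  apply ctx_ext. intros n. unfold ctx_union, ctx_empty. rewrite app_nil_r. auto.
  eapply tm_cnt. econstructor. eauto. constructor. all: lia.
Qed.

Lemma tm_F2 : forall G t A b e m f, typed_many G t A b e m f -> forall A', Forall2 ty_eqv A A' ->
  typed_many G t A' b e m f.
Proof.
  induction 1; intros A' HF; inversion HF; subst. constructor.
  constructor. eapply tconv; eauto. apply ctx_refl. auto.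
Qed.

Lemma tm_perm : forall A A', Permutation A A' -> forall G t b e m f, typed_many G t A b e m f ->
  exists G', ctx_eqv G G' /\ typed_many G' t A' b e m f.
Proof.
  induction 1; intros G t b e m f Hty.
  - eauto using ctx_refl.
  - apply tm_cons_inv in Hty as (G1 & D & b1 & e1 & m1 & f1 & b2 & e2 & m2 & f2 & -> & H1 & H2 & ->&->&->&->).
    apply IHPermutation in H2 as [D' [HD H2]]. exists (ctx_union G1 D'). split.
    apply ctx_union_cong; auto using ctx_refl. constructor; auto.
  - apply tm_cons_inv in Hty as (G1 & D & b1 & e1 & m1 & f1 & b2 & e2 & m2 & f2 & -> & H1 & H2 & ->&->&->&->).
    apply tm_cons_inv in H2 as (G2 & D2 & b3 & e3 & m3 & f3 & b4 & e4 & m4 & f4 & -> & H3 & H4 & ->&->&->&->).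
    exists (ctx_union G2 (ctx_union G1 D2)). split.
    apply ctx_perm. intros n. unfold ctx_union. apply Permutation_app_swap_app.
    eapply tm_cnt. constructor. eauto. constructor; eauto. all: lia.
  - apply IHPermutation1 in Hty as [G1 [HG1 H1]]. apply IHPermutation2 in H1 as [G2 [HG2 H2]].
    exists G2. split; auto. eapply ctx_trans; eauto.
Qed.

Lemma tm_conv : forall G t A b e m f A', typed_many G t A b e m f -> mt_eqv A A' ->
  exists G', ctx_eqv G G' /\ typed_many G' t A' b e m f.
Proof.
  intros. apply mt_char in H0 as [A'' [HP HF]].
  eapply tm_F2 in H; eauto. eapply tm_perm; [apply Permutation_sym; exact HP | exact H].
Qed.

Lemma tm_app_inv : forall A1 A2 G t b e m f, typed_many G t (A1 ++ A2) b e m f ->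
  exists G1 G2 b1 e1 m1 f1 b2 e2 m2 f2, G = ctx_union G1 G2 /\ typed_many G1 t A1 b1 e1 m1 f1 /\
   typed_many G2 t A2 b2 e2 m2 f2 /\ b = b1 + b2 /\ e = e1 + e2 /\ m = m1 + m2 /\ f = f1 + f2.
Proof.
  induction A1; intros A2 G t b e m f H.
  - exists ctx_empty, G. do 8 eexists. split. reflexivity. split. constructor. split. eauto. lia.
  - simpl in H. apply tm_cons_inv in H as (G1 & D & b1 & e1 & m1 & f1 & b2 & e2 & m2 & f2 & -> & H1 & H2 & ->&->&->&->).
    apply IHA1 in H2 as (D1 & D2 & b3 & e3 & m3 & f3 & b4 & e4 & m4 & f4 & -> & H3 & H4 & ->&->&->&->).
    exists (ctx_union G1 D1), D2. do 8 eexists. split.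
    extensionality n. unfold ctx_union. apply app_assoc.
    split. constructor; eauto. split. eauto. lia.
Qed.

Definition ins (c d : nat) (G : ctx) : ctx :=
  fun n => if n <? c then G n else if n <? c + d then [] else G (n - d).
Definition remove_at (x : nat) (G : ctx) : ctx :=
  fun n => if n <? x then G n else G (S n).

Ltac cmp := repeat match goal with
 | |- context [?a <? ?b] => destruct (Nat.ltb_spec a b)
 | |- context [?a =? ?b] => destruct (Nat.eqb_spec a b)
 | |- context [?a <=? ?b] => destruct (Nat.leb_spec a b)
 end; try lia.

Ltac ctxsolve := unfold ins, remove_at, Defs.remove, ctx_union, ctx_empty, ctx_single; cmp;
  simpl; try rewrite ?app_nil_r; try reflexivity; try solve [repeat (f_equal; try lia)].

Lemma restr_ext : forall G G' p, (forall n, n < psize p -> G n = G' n) -> restr G p = restr G' p.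
Proof. intros. unfold restr. apply map_ext_in. intros a Ha. apply in_seq in Ha. apply H. lia. Qed.

Scheme typed_mut := Induction for typed Sort Prop
with typed_many_mut := Induction for typed_many Sort Prop.
Combined Scheme typed_comb from typed_mut, typed_many_mut.

Lemma lift_typed :
  (forall G t s b e m f, typed G t s b e m f -> forall c d, typed (ins c d G) (lift d c t) s b e m f) /\
  (forall G t A b e m f, typed_many G t A b e m f -> forall c d, typed_many (ins c d G) (lift d c t) A b e m f).
Proof.
  apply typed_comb; intros; simpl.
  - destruct (Nat.leb_spec c x).
    + replace (ins c d (ctx_single x s)) with (ctx_single (x + d) s) by (extensionality n; ctxsolve). constructor.
    + replace (ins c d (ctx_single x s)) with (ctx_single x s) by (extensionality n; ctxsolve). constructor.
  - replace (ins c d (Defs.remove G p)) with (Defs.remove (ins (c + psize p) d G) p) by (extensionality n; ctxsolve).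
    apply ty_abs; auto. rewrite (restr_ext _ G); auto. intros; ctxsolve.
  - replace (ins c d (Defs.remove G p)) with (Defs.remove (ins (c + psize p) d G) p) by (extensionality n; ctxsolve).
    eapply ty_abs_p; eauto. rewrite (restr_ext _ G); auto. intros; ctxsolve.
  - replace (ins c d (ctx_union G D)) with (ctx_union (ins c d G) (ins c d D)) by (extensionality n; ctxsolve).
    econstructor; eauto.
  - constructor; auto.
  - replace (ins c d (ctx_union G D)) with (ctx_union (ins c d G) (ins c d D)) by (extensionality n; ctxsolve).
    econstructor; eauto.
  - replace (ins c d ctx_empty) with ctx_empty by (extensionality n; ctxsolve). constructor.
  - replace (ins c d (ctx_union (Defs.remove G p) D)) with (ctx_union (Defs.remove (ins (c + psize p) d G) p) (ins c d D))
      by (extensionality n; ctxsolve).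
    econstructor; eauto. rewrite (restr_ext _ G); auto. intros; ctxsolve.
  - eapply ty_conv; eauto. intros n. unfold ins. cmp; auto. constructor.
  - replace (ins c d ctx_empty) with ctx_empty by (extensionality n; ctxsolve). constructor.
  - replace (ins c d (ctx_union G D)) with (ctx_union (ins c d G) (ins c d D)) by (extensionality n; ctxsolve).
    econstructor; eauto.
Qed.

Lemma perm4 : forall {T} (a b c d : list T), Permutation ((a ++ b) ++ (c ++ d)) ((a ++ c) ++ (b ++ d)).
Proof.
  intros. rewrite <- !app_assoc. apply Permutation_app_head. rewrite !app_assoc.
  apply Permutation_app_tail. apply Permutation_app_comm.
Qed.

Ltac eqarg := first [reflexivity | solve [repeat (f_equal; try lia)]].
Ltac p4 := match goal with |- Permutation ((?a ++ ?b) ++ (?c ++ ?d)) ((?a' ++ ?c') ++ (?b' ++ ?d')) =>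
  replace a' with a by eqarg; replace b' with b by eqarg; replace c' with c by eqarg;
  replace d' with d by eqarg; apply perm4 end.
Ltac ctxperm := apply ctx_perm; let n := fresh "n" in intro n;
  unfold ins, remove_at, Defs.remove, ctx_union, ctx_empty; cmp;
  repeat match goal with |- context [?a - 0] => replace (a - 0) with a by lia end;
  try p4; try (rewrite ?app_nil_r; apply Permutation_refl).

Lemma tm_nil_ctx : forall D u b e m f, typed_many D u (ctx_empty 0) b e m f -> D = ctx_empty /\ b = 0 /\ e = 0 /\ m = 0 /\ f = 0.
Proof. intros. apply tm_nil_inv in H. auto. Qed.

Lemma subst_typed :
 (forall G t s b e m f, typed G t s b e m f -> forall x w Dw bw ew mw fw, typed_many Dw w (G x) bw ew mw fw ->
   typed (ctx_union (remove_at x G) (ins 0 x Dw)) (subst x w t) s (b+bw) (e+ew) (m+mw) (f+fw)) /\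
 (forall G t A b e m f, typed_many G t A b e m f -> forall x w Dw bw ew mw fw, typed_many Dw w (G x) bw ew mw fw ->
   exists G', ctx_eqv G' (ctx_union (remove_at x G) (ins 0 x Dw)) /\
     typed_many G' (subst x w t) A (b+bw) (e+ew) (m+mw) (f+fw)).
Proof.
  apply typed_comb.
  -
    intros y s x w Dw bw ew mw fw Hw. unfold ctx_single in Hw. simpl.
    destruct (Nat.eqb_spec x y).
    + subst. apply tm_single_inv in Hw. rewrite Nat.eqb_refl.
      apply (proj1 lift_typed) with (c := 0) (d := y) in Hw.
      replace (ctx_union (remove_at y (ctx_single y s)) (ins 0 y Dw)) with (ins 0 y Dw)
        by (extensionality zz; ctxsolve).
      eapply typed_cnt; [exact Hw| lia..].
    + apply tm_nil_inv in Hw as (-> & -> & -> & -> & ->).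
      destruct (Nat.eqb_spec y x); [lia|].
      destruct (Nat.ltb_spec x y).
      * replace (ctx_union (remove_at x (ctx_single y s)) (ins 0 x ctx_empty)) with (ctx_single (y - 1) s)
          by (extensionality zz; ctxsolve).
        eapply typed_cnt; [constructor| lia..].
      * replace (ctx_union (remove_at x (ctx_single y s)) (ins 0 x ctx_empty)) with (ctx_single y s)
          by (extensionality zz; ctxsolve).
        eapply typed_cnt; [constructor| lia..].
  -
    intros G t s p A b e m f ep mp fp Ht IH Hp x w Dw bw ew mw fw Hw. simpl.
    replace (ctx_union (remove_at x (Defs.remove G p)) (ins 0 x Dw)) with
      (Defs.remove (ctx_union (remove_at (x + psize p) G) (ins 0 (x + psize p) Dw)) p)
      by (extensionality zz; ctxsolve).
    eapply typed_cnt; [apply ty_abs; [apply IH; exact Hw| rewrite (restr_ext _ G); [exact Hp| intros; ctxsolve]] | lia..].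
  -
    intros G t s p b e m f Ht IH Htg Hf x w Dw bw ew mw fw Hw. simpl.
    replace (ctx_union (remove_at x (Defs.remove G p)) (ins 0 x Dw)) with
      (Defs.remove (ctx_union (remove_at (x + psize p) G) (ins 0 (x + psize p) Dw)) p)
      by (extensionality zz; ctxsolve).
    eapply typed_cnt; [eapply ty_abs_p; [apply IH; exact Hw| exact Htg | rewrite (restr_ext _ G); [exact Hf| intros; ctxsolve]] | lia..].
  -
    intros G D t u A s bt et mt ft bu eu mu fu Ht IHt Hu IHu x w Dw bw ew mw fw Hw. simpl.
    apply tm_app_inv in Hw as (D1 & D2 & b1 & e1 & m1 & f1 & b2 & e2 & m2 & f2 & -> & H1 & H2 & ->&->&->&->).
    destruct (IHu x w D2 _ _ _ _ H2) as [G' [HG' HU]].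
    eapply tconv. eapply typed_cnt. econstructor. apply IHt. exact H1. exact HU. 1-4: lia.
    2: apply ty_refl.
    eapply ctx_trans. apply ctx_union_cong. apply ctx_refl. exact HG'. ctxperm.
  -
    intros G t u b e m f Ht IH x w Dw bw ew mw fw Hw. simpl.
    eapply typed_cnt; [apply ty_app_p; apply IH; exact Hw| lia..].
  -
    intros G D t u A B bt et mt ft bu eu mu fu Ht IHt Hu IHu x w Dw bw ew mw fw Hw. simpl.
    apply tm_app_inv in Hw as (D1 & D2 & b1 & e1 & m1 & f1 & b2 & e2 & m2 & f2 & -> & H1 & H2 & ->&->&->&->).
    destruct (IHt x w D1 _ _ _ _ H1) as [G1 [HG1 HT]].
    destruct (IHu x w D2 _ _ _ _ H2) as [G2 [HG2 HU]].
    eapply tconv. eapply typed_cnt. econstructor. exact HT. exact HU. 1-4: lia.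
    2: apply ty_refl.
    eapply ctx_trans. apply ctx_union_cong. exact HG1. exact HG2. ctxperm.
  -
    intros t u x w Dw bw ew mw fw Hw. simpl.
    apply tm_nil_inv in Hw as (-> & -> & -> & -> & ->).
    replace (ctx_union (remove_at x ctx_empty) (ins 0 x ctx_empty)) with ctx_empty by (extensionality zz; ctxsolve).
    eapply typed_cnt; [constructor| lia..].
  -
    intros G D t p u s A bt et mt ft ep mp fp bu eu mu fu Ht IHt Hp Hu IHu x w Dw bw ew mw fw Hw. simpl.
    apply tm_app_inv in Hw as (D1 & D2 & b1 & e1 & m1 & f1 & b2 & e2 & m2 & f2 & -> & H1 & H2 & ->&->&->&->).
    destruct (IHu x w D2 _ _ _ _ H2) as [G' [HG' HU]].
    eapply tconv. eapply typed_cnt. eapply ty_match. apply IHt. exact H1.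
    rewrite (restr_ext _ G). exact Hp. intros; ctxsolve. exact HU. 1-4: lia.
    2: apply ty_refl.
    eapply ctx_trans. apply ctx_union_cong. apply ctx_refl. exact HG'. ctxperm.
  -
    intros G G' t s s' b e m f Ht IH Hc Hs x w Dw bw ew mw fw Hw.
    destruct (tm_conv _ _ _ _ _ _ _ _ Hw (mt_sym _ _ (Hc x))) as [D' [HD' Hw']].
    eapply tconv. apply IH. exact Hw'. 2: exact Hs.
    apply ctx_union_cong.
    + intro n. unfold remove_at. cmp; apply Hc.
    + intro n. unfold ins. cmp. constructor. apply mt_sym, HD'.
  -
    intros t x w Dw bw ew mw fw Hw.
    apply tm_nil_inv in Hw as (-> & -> & -> & -> & ->).
    exists ctx_empty. split. apply ctx_ext; intro n; ctxsolve. constructor.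
  -
    intros G D t s A b e m f b' e' m' f' Ht IHt Hm IHm x w Dw bw ew mw fw Hw.
    apply tm_app_inv in Hw as (D1 & D2 & b1 & e1 & m1 & f1 & b2 & e2 & m2 & f2 & -> & H1 & H2 & ->&->&->&->).
    destruct (IHm x w D2 _ _ _ _ H2) as [G' [HG' HU]].
    eexists. split. 2: eapply tm_cnt; [econstructor; [apply IHt; exact H1| exact HU]| lia..].
    eapply ctx_trans. apply ctx_union_cong. apply ctx_refl. exact HG'. ctxperm.
Qed.

Lemma inv_Sub : forall G t p u s b e m f, typed G (Sub t p u) s b e m f ->
  exists G1 D s1 A bt et mt ft ep mp fp bu eu mu fu,
    typed G1 t s1 bt et mt ft /\ pty (restr G1 p) p A ep mp fp /\ typed_many D u A bu eu mu fu /\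
    ctx_eqv (ctx_union (Defs.remove G1 p) D) G /\ ty_eqv s1 s /\
    b = bt + bu /\ e = et + eu + ep /\ m = mt + mu + mp /\ f = ft + fu + fp.
Proof.
  intros G t p u s b e m f H. remember (Sub t p u) as T. revert t p u HeqT.
  induction H; intros; inversion HeqT; subst.
  - do 15 eexists. repeat split; eauto using ctx_refl, ty_refl.
  - edestruct IHtyped as (G1 & D & s1 & A & bt & et & mt & ft & ep & mp & fp & bu & eu & mu & fu & K1 & K2 & K3 & K4 & K5 & ->&->&->&->); eauto.
    do 15 eexists. repeat split; eauto. eapply ctx_trans; eauto. eapply ty_trans; eauto.
Qed.

Lemma inv_Lam : forall G p t s b e m f, typed G (Lam p t) s b e m f ->
  (exists G0 s0 A b0 e0 m0 f0 ep mp fp, typed G0 t s0 b0 e0 m0 f0 /\ pty (restr G0 p) p A ep mp fp /\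
     ctx_eqv (Defs.remove G0 p) G /\ ty_eqv (TArr A s0) s /\ b = b0 + 1 /\ e = e0 + ep /\ m = m0 + mp /\ f = f0 + fp)
  \/ (exists G0 s0 b0 e0 m0 f0, typed G0 t s0 b0 e0 m0 f0 /\ tight s0 /\ Forall tight_mty (restr G0 p) /\
     ctx_eqv (Defs.remove G0 p) G /\ ty_eqv TM s /\ b = b0 /\ e = e0 /\ m = m0 /\ f = f0 + 1).
Proof.
  intros G p t s b e m f H. remember (Lam p t) as T. revert p t HeqT.
  induction H; intros; inversion HeqT; subst.
  - left. do 10 eexists. repeat split; eauto using ctx_refl, ty_refl.
  - right. do 6 eexists. repeat split; eauto using ctx_refl, ty_refl.
  - edestruct IHtyped as [(G0 & s0 & A & b0 & e0 & m0 & f0 & ep & mp & fp & K1 & K2 & K3 & K4 & ->&->&->&->)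
       |(G0 & s0 & b0 & e0 & m0 & f0 & K1 & K2 & K3 & K4 & K5 & ->&->&->&->)]; eauto.
    + left. do 10 eexists. repeat split; eauto. eapply ctx_trans; eauto. eapply ty_trans; eauto.
    + right. do 6 eexists. repeat split; eauto. eapply ctx_trans; eauto. eapply ty_trans; eauto.
Qed.

Lemma inv_App : forall G t u s b e m f, typed G (App t u) s b e m f ->
  (exists G1 D A s1 bt et mt ft bu eu mu fu, typed G1 t (TArr A s1) bt et mt ft /\ typed_many D u A bu eu mu fu /\
     ctx_eqv (ctx_union G1 D) G /\ ty_eqv s1 s /\ b = bt + bu /\ e = et + eu /\ m = mt + mu /\ f = ft + fu)
  \/ (exists G1 b0 e0 m0 f0, typed G1 t TN b0 e0 m0 f0 /\ ctx_eqv G1 G /\ ty_eqv TN s /\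
     b = b0 /\ e = e0 /\ m = m0 /\ f = f0 + 1).
Proof.
  intros G t u s b e m f H. remember (App t u) as T. revert t u HeqT.
  induction H; intros; inversion HeqT; subst.
  - left. do 12 eexists. repeat split; eauto using ctx_refl, ty_refl.
  - right. do 5 eexists. repeat split; eauto using ctx_refl, ty_refl.
  - edestruct IHtyped as [(G1 & D & A & s1 & bt & et & mt & ft & bu & eu & mu & fu & K1 & K2 & K3 & K4 & ->&->&->&->)
       |(G1 & b0 & e0 & m0 & f0 & K1 & K2 & K3 & ->&->&->&->)]; eauto.
    + left. do 12 eexists. repeat split; eauto. eapply ctx_trans; eauto. eapply ty_trans; eauto.
    + right. do 5 eexists. repeat split; eauto. eapply ctx_trans; eauto. eapply ty_trans; eauto.
Qed.

Lemma inv_Pair : forall G t u s b e m f, typed G (Pair t u) s b e m f ->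
  (exists G1 D A B bt et mt ft bu eu mu fu, typed_many G1 t A bt et mt ft /\ typed_many D u B bu eu mu fu /\
     ctx_eqv (ctx_union G1 D) G /\ ty_eqv (TProd A B) s /\ b = bt + bu /\ e = et + eu /\ m = mt + mu /\ f = ft + fu)
  \/ ty_eqv TM s.
Proof.
  intros G t u s b e m f H. remember (Pair t u) as T. revert t u HeqT.
  induction H; intros; inversion HeqT; subst.
  - left. do 12 eexists. repeat split; eauto using ctx_refl, ty_refl.
  - right. apply ty_refl.
  - edestruct IHtyped as [(G1 & D & A & B & bt & et & mt & ft & bu & eu & mu & fu & K1 & K2 & K3 & K4 & ->&->&->&->)
       | K1]; eauto.
    + left. do 12 eexists. repeat split; eauto. eapply ctx_trans; eauto. eapply ty_trans; eauto.
    + right. eapply ty_trans; eauto.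
Qed.

Lemma perm3 : forall {T} (a b c : list T), Permutation ((a ++ b) ++ c) ((a ++ c) ++ b).
Proof. intros. rewrite <- !app_assoc. apply Permutation_app_head, Permutation_app_comm. Qed.

Lemma plug_inv : forall L G w s b e m f, typed G (plug L w) s b e m f ->
  exists Gw sw bw ew mw fw bL eL mL fL, typed Gw w sw bw ew mw fw /\ ty_eqv sw s /\
    b = bL + bw /\ e = eL + ew /\ m = mL + mw /\ f = fL + fw /\
    (forall D w' s' b' e' m' f', typed (ctx_union Gw (ins 0 (bvL L) D)) w' s' b' e' m' f' ->
       typed (ctx_union G D) (plug L w') s' (bL + b') (eL + e') (mL + m') (fL + f')).
Proof.
  induction L as [|[p u] L IH]; intros G w s b e m f H; simpl in *.
  - exists G, s, b, e, m, f, 0, 0, 0, 0. repeat split; auto using ty_refl.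
    intros. replace (ctx_union G D) with (ctx_union G (ins 0 0 D)) by (extensionality zz; ctxsolve). auto.
  - apply inv_Sub in H as (G1 & D1 & s1 & A & bt & et & mt & ft & ep & mp & fp & bu & eu & mu & fu & H1 & H2 & H3 & H4 & H5 & ->&->&->&->).
    apply IH in H1 as (Gw & sw & bw & ew & mw & fw & bL & eL & mL & fL & Hw & Hsw & ->&->&->&-> & R).
    exists Gw, sw, bw, ew, mw, fw, (bL + bu), (eL + eu + ep), (mL + mu + mp), (fL + fu + fp).
    repeat split; try lia. exact Hw. eapply ty_trans; eauto.
    intros D w' s' b' e' m' f' Hw'.
    assert (Hx : typed (ctx_union Gw (ins 0 (bvL L) (ins 0 (psize p) D))) w' s' b' e' m' f').
    { replace (ctx_union Gw (ins 0 (bvL L) (ins 0 (psize p) D))) with (ctx_union Gw (ins 0 (psize p + bvL L) D))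
        by (extensionality zz; ctxsolve). exact Hw'. }
    apply R in Hx.
    eapply tconv. eapply typed_cnt. eapply ty_match. exact Hx.
    rewrite (restr_ext _ G1). exact H2. intros; ctxsolve. exact H3. 1-4: lia.
    2: apply ty_refl.
    replace (Defs.remove (ctx_union G1 (ins 0 (psize p) D)) p) with (ctx_union (Defs.remove G1 p) D)
      by (extensionality zz; ctxsolve).
    eapply ctx_trans. 2: apply ctx_union_cong; [exact H4 | apply ctx_refl].
    apply ctx_perm. intro n. unfold ctx_union. apply perm3.
Qed.

Lemma teqv_TN : forall x, ty_eqv TN x -> x = TN.
Proof. intros x H; inversion H; auto. Qed.
Lemma teqv_TM : forall x, ty_eqv TM x -> x = TM.
Proof. intros x H; inversion H; auto. Qed.
Lemma teqv_arr : forall A s x, ty_eqv (TArr A s) x -> exists A' s', x = TArr A' s' /\ mt_eqv A A' /\ ty_eqv s s'.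
Proof. intros A s x H; inversion H; subst; eauto. Qed.
Lemma teqv_prod : forall A B x, ty_eqv (TProd A B) x -> exists A' B', x = TProd A' B' /\ mt_eqv A A' /\ mt_eqv B B'.
Proof. intros A B x H; inversion H; subst; eauto. Qed.

Lemma ins_eqv : forall c d D D', ctx_eqv D D' -> ctx_eqv (ins c d D) (ins c d D').
Proof. intros c d D D' H n. unfold ins. cmp; auto. constructor. Qed.

Lemma pty_len : forall G p A e m f, pty G p A e m f -> length G = psize p.
Proof. induction 1; simpl; auto. rewrite length_app; lia. Qed.

Lemma pty_pair_single : forall G p1 p2 A e m f, pty G (PPair p1 p2) A e m f -> exists X, A = [X].
Proof. intros. inversion H; subst; eauto. Qed.

Lemma app_len_inv : forall {T} (l1 l2 l1' l2' : list T), l1 ++ l2 = l1' ++ l2' -> length l1 = length l1' ->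
  l1 = l1' /\ l2 = l2'.
Proof.
  induction l1; intros; destruct l1'; simpl in *; try discriminate; auto.
  inversion H; subst. edestruct IHl1; eauto. subst; auto.
Qed.

Lemma map_seq_ext : forall n a b (F G : nat -> mty), (forall i, i < n -> F (a + i) = G (b + i)) ->
  map F (seq a n) = map G (seq b n).
Proof.
  induction n; intros; simpl; auto. f_equal.
  - specialize (H 0). rewrite !Nat.add_0_r in H. apply H; lia.
  - apply IHn. intros. specialize (H (S i)). replace (S a + i) with (a + S i) by lia.
    replace (S b + i) with (b + S i) by lia. apply H; lia.
Qed.

Lemma restr_pair : forall G p1 p2, restr G (PPair p1 p2) = restr G p1 ++ map G (seq (psize p1) (psize p2)).
Proof. intros. unfold restr. simpl. rewrite seq_app, map_app. auto. Qed.

Lemma not_arr_TN : forall A s, ty_eqv (TArr A s) TN -> False.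
Proof. intros. inversion H. Qed.
Lemma not_arr_TM : forall A s, ty_eqv TM (TArr A s) -> False.
Proof. intros. inversion H. Qed.

Lemma pty_pair_inv : forall G p1 p2 A e m f, pty G (PPair p1 p2) A e m f ->
  (exists G1 G2 A1 B1 e1 m1 f1 e2 m2 f2, G = G1 ++ G2 /\ pty G1 p1 A1 e1 m1 f1 /\ pty G2 p2 B1 e2 m2 f2 /\
     A = [TProd A1 B1] /\ e = e1 + e2 /\ m = 1 + m1 + m2 /\ f = f1 + f2) \/ A = [TN].
Proof. intros. inversion H; subst; [left; do 10 eexists; eauto 10 | right; auto]. Qed.

Definition rel (k : kind) (b e m b' e' m' : nat) : Prop :=
  match k with
  | KB => b = S b' /\ e' = e /\ m' = m
  | KE => b' = b /\ e = S e' /\ m' = m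
  | KM => b' = b /\ e' = e /\ m = S m'
  end.

Lemma main : forall t G s b e m f k t', typed G t s b e m f -> hred t k t' ->
  exists b' e' m', typed G t' s b' e' m' f /\ rel k b e m b' e' m'.
Proof.
  induction t as [n | p t IH | t1 IH1 t2 IH2 | t1 IH1 t2 IH2 | t1 IH1 p t2 IH2];
    intros G s b e m f k t' Ht Hr; simpl in Hr.
  - contradiction.
  -
    destruct Hr as [s' [Hr ->]].
    apply inv_Lam in Ht as [(G0 & s0 & A & b0 & e0 & m0 & f0 & ep & mp & fp & K1 & K2 & K3 & K4 & ->&->&->&->)
       |(G0 & s0 & b0 & e0 & m0 & f0 & K1 & K2 & K3 & K4 & K5 & ->&->&->&->)].
    + destruct (IH _ _ _ _ _ _ _ _ K1 Hr) as (b' & e' & m' & K6 & K7).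
      exists (b' + 1), (e' + ep), (m' + mp). split.
      eapply tconv; [apply ty_abs; eauto | exact K3 | exact K4].
      destruct k; simpl in *; lia.
    + destruct (IH _ _ _ _ _ _ _ _ K1 Hr) as (b' & e' & m' & K6 & K7).
      exists b', e', m'. split.
      eapply tconv; [eapply ty_abs_p; eauto | exact K4 | exact K5].
      destruct k; simpl in *; lia.
  - contradiction.
  -
    destruct Hr as [[-> (L & p & s0 & -> & ->)] | [Hna (s' & Hr & ->)]].
    + apply inv_App in Ht as [(G1 & D & A & s1 & bt & et & mt & ft & bu & eu & mu & fu & K1 & K2 & K3 & K4 & ->&->&->&->)
         |(G1 & b0 & e0 & m0 & f0 & K1 & K2 & K3 & ->&->&->&->)].
      * apply plug_inv in K1 as (Gw & sw & bw & ew & mw & fw & bL & eL & mL & fL & Hw & Hsw & ->&->&->&-> & R).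
        apply inv_Lam in Hw as [(G0 & s2 & A0 & b0 & e0 & m0 & f0 & ep & mp & fp & J1 & J2 & J3 & J4 & ->&->&->&->)
          |(G0 & s2 & b0 & e0 & m0 & f0 & J1 & J2 & J3 & J4 & J5 & ->&->&->&->)].
        -- pose proof (ty_trans _ _ J4 _ Hsw) as J6. inversion J6; subst.
           destruct (tm_conv _ _ _ _ _ _ _ _ K2 (mt_sym _ _ H2)) as [D' [HD' K2']].
           apply (proj2 lift_typed) with (c := 0) (d := bvL L) in K2'.
           assert (J7 := ty_match _ _ _ _ _ _ _ _ _ _ _ _ _ _ _ _ _ _ J1 J2 K2').
           assert (J8 : typed (ctx_union Gw (ins 0 (bvL L) D)) (Sub s0 p (lift (bvL L) 0 t2)) s2
                     (b0 + bu) (e0 + eu + ep) (m0 + mu + mp) (f0 + fu + fp)).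
           { eapply tconv. exact J7. apply ctx_union_cong. exact J3. apply ins_eqv. apply ctx_sym; exact HD'.
             apply ty_refl. }
           apply R in J8.
           exists (bL + (b0 + bu)), (eL + (e0 + eu + ep)), (mL + (m0 + mu + mp)). split.
           eapply typed_cnt. eapply tconv. exact J8. exact K3. eapply ty_trans; eauto. all: simpl; lia.
        -- exfalso. eapply not_arr_TM. eapply ty_trans; eauto.
      * apply plug_inv in K1 as (Gw & sw & bw & ew & mw & fw & bL & eL & mL & fL & Hw & Hsw & ->&->&->&-> & R).
        apply ty_sym, teqv_TN in Hsw. subst sw.
        apply inv_Lam in Hw as [(G0 & s2 & A0 & b1 & e1 & m1 & f1 & ep & mp & fp & J1 & J2 & J3 & J4 & _)
          |(G0 & s2 & b1 & e1 & m1 & f1 & J1 & J2 & J3 & J4 & J5 & _)].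
        -- exfalso. eapply not_arr_TN; eauto.
        -- apply teqv_TM in J5. discriminate.
    + apply inv_App in Ht as [(G1 & D & A & s1 & bt & et & mt & ft & bu & eu & mu & fu & K1 & K2 & K3 & K4 & ->&->&->&->)
         |(G1 & b0 & e0 & m0 & f0 & K1 & K2 & K3 & ->&->&->&->)].
      * destruct (IH1 _ _ _ _ _ _ _ _ K1 Hr) as (b' & e' & m' & K6 & K7).
        exists (b' + bu), (e' + eu), (m' + mu). split.
        eapply tconv; [econstructor; eauto | exact K3 | exact K4].
        destruct k; simpl in *; lia.
      * destruct (IH1 _ _ _ _ _ _ _ _ K1 Hr) as (b' & e' & m' & K6 & K7).
        exists b', e', m'. split.
        eapply tconv; [apply ty_app_p; eauto | exact K2 | exact K3].
        destruct k; simpl in *; lia.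
  -
    apply inv_Sub in Ht as (G1 & D & s1 & A & bt & et & mt & ft & ep & mp & fp & bu & eu & mu & fu & K1 & K2 & K3 & K4 & K5 & ->&->&->&->).
    destruct Hr as [Hr | [Hr | [Hr | Hr]]].
    +
      destruct Hr as (-> & _ & p1 & p2 & L & u1 & u2 & -> & -> & ->).
      apply pty_pair_inv in K2 as [(Gp & Dq & A1 & B1 & e1 & m1 & f1 & e2 & m2 & f2 & Heq & Q1 & Q2 & -> & -> & -> & ->) | ->].
      2: { apply tm_single_inv in K3.
           apply plug_inv in K3 as (Gw & sw & bw & ew & mw & fw & bL & eL & mL & fL & Hw & Hsw & _).
           apply ty_sym, teqv_TN in Hsw. subst sw.
           apply inv_Pair in Hw as [(Ga & Db & A' & B' & ba & ea & ma & fa & bb & eb & mb & fb & J1 & J2 & J3 & J4 & _) | J1].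
           - inversion J4. - inversion J1. }
      apply tm_single_inv in K3.
      apply plug_inv in K3 as (Gw & sw & bw & ew & mw & fw & bL & eL & mL & fL & Hw & Hsw & ->&->&->&-> & R).
      apply inv_Pair in Hw as [(Ga & Db & A' & B' & ba & ea & ma & fa & bb & eb & mb & fb & J1 & J2 & J3 & J4 & ->&->&->&->) | J1].
      2: { exfalso. pose proof (ty_trans _ _ J1 _ Hsw) as J. inversion J. }
      pose proof (ty_trans _ _ J4 _ Hsw) as J5.
      apply teqv_prod in J5 as (A2 & B2 & E & HA & HB). injection E as <- <-.
      destruct (tm_conv _ _ _ _ _ _ _ _ J1 HA) as [Ga' [HGa J1']].
      destruct (tm_conv _ _ _ _ _ _ _ _ J2 HB) as [Db' [HDb J2']].
      rewrite restr_pair in Heq. apply app_len_inv in Heq as [Hp1 Hp2].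
      2: { rewrite (pty_len _ _ _ _ _ _ Q1). unfold restr; rewrite length_map, length_seq; auto. }
      subst Gp Dq.
      pose proof (proj1 lift_typed _ _ _ _ _ _ _ K1 (psize p1 + psize p2) (bvL L)) as S1.
      pose proof (proj2 lift_typed _ _ _ _ _ _ _ J1' 0 (psize p2)) as S2.
      pose proof (ty_match _ _ _ _ _ _ _ _ _ _ _ _ _ _ _ _ _ _ S1 ltac:(rewrite (restr_ext _ G1); [exact Q1| intros; ctxsolve]) S2) as I1.
      pose proof (ty_match _ _ _ _ _ _ _ _ _ _ _ _ _ _ _ _ _ _ I1
        ltac:(unfold restr at 1; rewrite (map_seq_ext _ 0 (psize p1) _ G1); [exact Q2| intros; ctxsolve]) J2') as I2.
      assert (I3 : typed (ctx_union Gw (ins 0 (bvL L) (Defs.remove G1 (PPair p1 p2))))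
                (Sub (Sub (lift (bvL L) (psize p1 + psize p2) t1) p1 (lift (psize p2) 0 u1)) p2 u2) s1
                (bt + ba + bb) (et + ea + e1 + eb + e2) (mt + ma + m1 + mb + m2) (ft + fa + f1 + fb + f2)).
      { eapply tconv. exact I2. 2: apply ty_refl.
        eapply ctx_trans. apply (ctx_ext _ (ctx_union (ctx_union (ins 0 (bvL L) (Defs.remove G1 (PPair p1 p2))) Ga') Db')).
        intro n; ctxsolve.
        eapply ctx_trans. apply ctx_perm. intro n. unfold ctx_union. rewrite <- app_assoc. apply Permutation_app_comm.
        apply ctx_union_cong. 2: apply ctx_refl. eapply ctx_trans. 2: exact J3.
        apply ctx_union_cong; apply ctx_sym; auto. }
      apply R in I3.
      exists (bL + (bt + ba + bb)), (eL + (et + ea + e1 + eb + e2)), (mL + (mt + ma + m1 + mb + m2)). split.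
      eapply typed_cnt. eapply tconv. exact I3. 2: exact K5.
      eapply ctx_trans. 2: exact K4. apply ctx_perm; intro n; unfold ctx_union; apply Permutation_app_comm.
      all: simpl; lia.
    +
      destruct Hr as (-> & _ & -> & ->).
      simpl in K2. inversion K2; subst.
      pose proof (proj1 subst_typed _ _ _ _ _ _ _ K1 0 t2 D _ _ _ _ K3) as J.
      exists (bt + bu), (et + eu), (mt + mu). split.
      eapply typed_cnt. eapply tconv. exact J. 2: exact K5.
      eapply ctx_trans. 2: exact K4. apply ctx_ext. intros; ctxsolve. all: simpl; lia.
    +
      destruct Hr as (s' & Hr & ->).
      destruct (IH1 _ _ _ _ _ _ _ _ K1 Hr) as (b' & e' & m' & K6 & K7).
      exists (b' + bu), (e' + eu + ep), (m' + mu + mp). split.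
      eapply tconv; [econstructor; eauto | exact K4 | exact K5].
      destruct k; simpl in *; lia.
    +
      destruct Hr as (_ & Hp & u' & Hr & ->).
      destruct p as [|p1 p2]; [contradiction|].
      destruct (pty_pair_single _ _ _ _ _ _ _ K2) as [X ->].
      apply tm_single_inv in K3.
      destruct (IH2 _ _ _ _ _ _ _ _ K3 Hr) as (b' & e' & m' & K6 & K7).
      apply tm_single in K6 as [D' [HD' K6]].
      exists (bt + b'), (et + e' + ep), (mt + m' + mp). split.
      eapply tconv; [econstructor; eauto | | exact K5].
      eapply ctx_trans. 2: exact K4. apply ctx_union_cong. apply ctx_refl. exact HD'.
      destruct k; simpl in *; lia.
Qed.

Theorem lemma6 (G : ctx) (t t' : term) (s : ty) (b e m f : nat) (k : kind) :
  typed G t s b e m f -> hred t k t' ->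
  exists b' e' m',
    typed G t' s b' e' m' f /\
    match k with
    | KB => b = S b' /\ e' = e /\ m' = m
    | KE => b' = b /\ e = S e' /\ m' = m
    | KM => b' = b /\ e' = e /\ m = S m'
    end.
Proof.
  intros Ht Hr. destruct (main _ _ _ _ _ _ _ _ _ Ht Hr) as (b' & e' & m' & H1 & H2).
  exists b', e', m'. split; auto.
Qed.
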